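(* Let $G$ be an $n\times n$ positive semidefinite matrix and $\beta\in(0,1]$. Then there is a subspace $W\subseteq\mathbb{R}^n$ with $\dim(W)\ge(1-\beta)n$ such that $w^TGw\le\frac1\beta w^T\mathrm{diag}(G)w$ for all $w\in W$.
   Context: $\mathrm{diag}(G)$ denotes the diagonal matrix with the same diagonal entries as $G$. *)

(* Defs.v *)
From HB Require Import structures.
From mathcomp Require Import all_boot all_order all_algebra.
From mathcomp Require Import reals.
Set Implicit Arguments. Unset Strict Implicit. Unset Printing Implicit Defensive.
Import Order.TTheory GRing.Theory Num.Theory.
Local Open Scope ring_scope.

Definition qform (R : ringType) (n : nat) (A : 'M[R]_n) (w : 'rV[R]_n) : R :=
  (w *m A *m w^T) 0 0.

Definition diagm (R : ringType) (n : nat) (G : 'M[R]_n) : 'M[R]_n :=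
  diag_mx (\row_i G i i).

Definition psd (R : realType) (n : nat) (G : 'M[R]_n) : Prop :=
  G^T = G /\ forall x : 'rV[R]_n, 0 <= qform G x.

(* Main.v *)
Require Import Defs.
From HB Require Import structures.
From mathcomp Require Import all_boot all_order all_algebra.
From mathcomp Require Import reals.
From Stdlib Require Import Classical.
From mathcomp Require Import ring lra.
From Stdlib Require Import Lia.
From mathcomp Require Import zify.
Import Order.TTheory GRing.Theory Num.Theory.
Local Open Scope ring_scope.
Set Implicit Arguments. Unset Strict Implicit. Unset Printing Implicit Defensive.

Section Aux.
Variable R : realType.
Variable n : nat.
Implicit Types (A : 'M[R]_n) (x y z : 'rV[R]_n).

Definition bf A x y : R := (x *m A *m y^T) 0 0.

Lemma bfDl A x y z : bf A (x + y) z = bf A x z + bf A y z.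
Proof. by rewrite /bf !mulmxDl mxE. Qed.
Lemma bfZl A a x z : bf A (a *: x) z = a * bf A x z.
Proof. by rewrite /bf -!scalemxAl mxE. Qed.
Lemma bfDr A x y z : bf A z (x + y) = bf A z x + bf A z y.
Proof. by rewrite /bf linearD /= mulmxDr mxE. Qed.
Lemma bfZr A a x z : bf A z (a *: x) = a * bf A z x.
Proof. by rewrite /bf linearZ /= -scalemxAr mxE. Qed.
Lemma bf0l A z : bf A 0 z = 0.
Proof. by rewrite /bf !mul0mx mxE. Qed.
Lemma bf0r A z : bf A z 0 = 0.
Proof. by rewrite /bf trmx0 mulmx0 mxE. Qed.
Lemma bfDm A A' x y : bf (A + A') x y = bf A x y + bf A' x y.
Proof. by rewrite /bf mulmxDr mulmxDl mxE. Qed.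
Lemma bfNm A x y : bf (- A) x y = - bf A x y.
Proof. by rewrite /bf mulmxN mulNmx mxE. Qed.
Lemma bfZm a A x y : bf (a *: A) x y = a * bf A x y.
Proof. by rewrite /bf -scalemxAr -scalemxAl mxE. Qed.
Lemma bfC A x y : A^T = A -> bf A x y = bf A y x.
Proof.
move=> sA; rewrite /bf.
have -> : (x *m A *m y^T) 0 0 = ((x *m A *m y^T)^T) 0 0 by rewrite [RHS]mxE.
by rewrite !trmx_mul trmxK sA mulmxA.
Qed.

Lemma mul3E m p (X : 'M[R]_(m, n)) A (Y : 'M[R]_(p, n)) i j :
  (X *m A *m Y^T) i j = bf A (row i X) (row j Y).
Proof.
rewrite /bf !mxE; apply: eq_bigr => k _; rewrite !mxE; congr (_ * _).
by apply: eq_bigr => l _; rewrite !mxE.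
Qed.

Lemma bf_delta A i j : bf A (delta_mx 0 i) (delta_mx 0 j) = A i j.
Proof.
rewrite /bf trmx_delta -rowE -colE !mxE //.
Qed.

End Aux.

Section GFacts.
Variable R : realType.
Variable n : nat.
Variable G : 'M[R]_n.
Hypothesis sG : G^T = G.
Hypothesis pG : forall x : 'rV[R]_n, 0 <= qform G x.

Lemma Gsym i j : G j i = G i j.
Proof. by rewrite -[in LHS]sG mxE. Qed.

Lemma bfG_ge0 x : 0 <= bf G x x.
Proof. exact: pG. Qed.

Lemma Gii_ge0 i : 0 <= G i i.
Proof. by rewrite -bf_delta bfG_ge0. Qed.

Lemma bf_diag (d : 'rV[R]_n) x y :
  bf (diag_mx d) x y = \sum_j x 0 j * d 0 j * y 0 j.
Proof.
by rewrite /bf mul_mx_diag mxE; apply: eq_bigr => j _; rewrite !mxE.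
Qed.

Lemma diag_zero i j : G i i = 0 -> G i j = 0.
Proof.
move=> Gii; apply: contra_eq (isT : true) => Gij.
pose e := fun k : 'I_n => delta_mx 0 k : 'rV[R]_n.
have key t : 0 <= t * (2 * G i j) + G j j.
  have := bfG_ge0 (t *: e i + e j).
  rewrite bfDl !bfDr !bfZl !bfZr !bf_delta Gii (Gsym i j).
  match goal with |- is_true (0 <= ?a) -> _ => have -> : a = t * (2 * G i j) + G j j by ring end.
  by [].
have := key (- (G j j + 1) / (2 * G i j)).
have h2 : 2 * G i j != 0 by rewrite mulf_eq0 negb_or Gij andbT pnatr_eq0.
rewrite mulrAC -mulrA divff // mulr1.
suff -> : - (G j j + 1) + G j j = -1 by rewrite ler0N1.
by ring.
Qed.

Definition Pi := diag_mx (\row_j (G j j != 0)%:R : 'rV[R]_n).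
Definition Dg := diagm G.

Lemma PiGPi : Pi *m G *m Pi = G.
Proof.
apply/matrixP => i j; rewrite mul_mx_diag mul_diag_mx !mxE.
have [Gii|Gii] := eqVneq (G i i) 0.
  by rewrite (diag_zero j Gii) /= !(mul0r, mulr0).
have [Gjj|Gjj] := eqVneq (G j j) 0.
  by rewrite -(Gsym i j) (diag_zero i Gjj) /= !(mul0r, mulr0).
by rewrite /= mul1r mulr1.
Qed.

Lemma PiT : Pi^T = Pi. Proof. exact: tr_diag_mx. Qed.
Lemma DgT : Dg^T = Dg. Proof. exact: tr_diag_mx. Qed.

Lemma PiDg : Pi *m Dg = Dg.
Proof.
rewrite /Pi /Dg /diagm mulmx_diag; congr diag_mx; apply/rowP => j; rewrite !mxE.
by have [->|] := eqVneq (G j j) 0; rewrite ?mulr0 ?mul1r.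
Qed.

Lemma DgPi : Dg *m Pi = Dg.
Proof. by rewrite -[Dg]DgT -PiT -trmx_mul PiDg. Qed.

Lemma bfDg_ge0 x : 0 <= bf Dg x x.
Proof.
rewrite /Dg /diagm bf_diag; apply: sumr_ge0 => j _; rewrite mxE.
by rewrite mulrAC -expr2 mulr_ge0 ?sqr_ge0 ?Gii_ge0.
Qed.

Lemma bfDg0 x : bf Dg x x = 0 -> bf G x x = 0.
Proof.
rewrite /Dg /diagm bf_diag => /eqP; rewrite psumr_eq0; last first.
  by move=> j _; rewrite mxE mulrAC -expr2 mulr_ge0 ?sqr_ge0 ?Gii_ge0.
move=> /allP h.
have xPi : x *m Pi = 0.
  apply/rowP => j; rewrite mul_mx_diag !mxE.
  have := h j (mem_index_enum j); rewrite /= mxE mulrAC -expr2 mulf_eq0 sqrf_eq0.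
  by case/orP => /eqP ->; rewrite ?eqxx ?mulr0 ?mul0r.
rewrite /bf -PiGPi.
have -> : x *m (Pi *m G *m Pi) *m x^T = (x *m Pi) *m G *m (x *m Pi)^T.
  by rewrite trmx_mul PiT !mulmxA.
by rewrite xPi !mul0mx mxE.
Qed.

End GFacts.

Lemma alg_id (R : comRingType) m (Q D E P : 'M[R]_m) : Q *m P = Q -> P *m Q = Q ->
  D *m E = P -> E *m D = P -> Q *m D *m Q = Q ->
  (E - Q *m D *m E) *m (1%:M - D *m Q) = E - Q.
Proof.
move=> QP PQ DE ED QDQ.
rewrite mulmxBl !mulmxBr !mulmx1 -(mulmxA Q D E) DE QP.
rewrite (mulmxA E D Q) ED PQ (mulmxA Q D Q) QDQ.
by rewrite subrr subr0.
Qed.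

Section Trace.
Variable R : realType.
Variable n : nat.
Variable G : 'M[R]_n.
Hypothesis sG : G^T = G.
Hypothesis pG : forall x : 'rV[R]_n, 0 <= qform G x.
Variable beta : R.
Hypothesis hb : 0 < beta.

Lemma trace_bound k (X : 'M[R]_(k, n)) (s : 'rV[R]_k) :
  X *m Pi G = X ->
  X *m Dg G *m X^T = diag_mx s ->
  (forall i, 0 < s 0 i) ->
  (forall i, s 0 i < beta * (X *m G *m X^T) i i) ->
  k%:R <= beta * n%:R.
Proof.
move=> XPi XD spos sb.
pose Sinv := diag_mx (\row_i (s 0 i)^-1).
pose Einv := diag_mx (\row_j (G j j)^-1).
pose Q := X^T *m Sinv *m X.
pose D := Dg G.
have DE : D *m Einv = Pi G.
  rewrite /D /Dg /diagm /Pi mulmx_diag; congr diag_mx; apply/rowP => j; rewrite !mxE.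
  by have [->|h] := eqVneq (G j j) 0; rewrite ?mul0r // mulfV.
have ED : Einv *m D = Pi G.
  rewrite /D /Dg /diagm /Pi mulmx_diag; congr diag_mx; apply/rowP => j; rewrite !mxE.
  by have [->|h] := eqVneq (G j j) 0; rewrite ?mulr0 // mulVf.
have QPi : Q *m Pi G = Q by rewrite /Q -mulmxA XPi.
have PiQ : Pi G *m Q = Q.
  have PX : Pi G *m X^T = X^T.
    by rewrite -[in LHS]PiT -trmx_mul XPi.
  by rewrite /Q !mulmxA PX.
have SsS : Sinv *m diag_mx s *m Sinv = Sinv.
  rewrite /Sinv !mulmx_diag; congr diag_mx; apply/rowP => j; rewrite !mxE.
  by rewrite mulVf ?mul1r // gt_eqF.
have QDQ : Q *m D *m Q = Q.
  rewrite /Q /D.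
  have -> : X^T *m Sinv *m X *m Dg G *m (X^T *m Sinv *m X)
     = X^T *m (Sinv *m (X *m Dg G *m X^T) *m Sinv) *m X by rewrite !mulmxA.
  by rewrite XD SsS.
have QT : Q^T = Q by rewrite /Q !trmx_mul trmxK tr_diag_mx mulmxA.
pose M := 1%:M - D *m Q.
have MT : M^T = 1%:M - Q *m D.
  by rewrite /M linearB /= trmx1 trmx_mul QT DgT.
have hE : M^T *m Einv *m M = Einv - Q.
  by rewrite MT /M mulmxBl mul1mx (alg_id QPi PiQ DE ED QDQ).
have t1 : 0 <= \tr (G *m (Einv - Q)).
  rewrite -hE.
  have -> : \tr (G *m (M^T *m Einv *m M)) = \tr (M *m G *m M^T *m Einv).
    by rewrite !mulmxA mxtrace_mulC !mulmxA.
  rewrite /mxtrace; apply: sumr_ge0 => j _; rewrite mul_mx_diag mxE mul3E mxE.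
  by apply: mulr_ge0; [exact: pG | rewrite invr_ge0 (Gii_ge0 pG)].
have t2 : \tr (G *m Einv) <= n%:R.
  have <- : \sum_(j < n) (1:R) = n%:R by rewrite sumr_const card_ord.
  rewrite /mxtrace; apply: ler_sum => j _; rewrite mul_mx_diag !mxE.
  by have [->|h] := eqVneq (G j j) 0; rewrite ?mul0r // mulfV.
have t3 : k%:R / beta <= \tr (G *m Q).
  have -> : \tr (G *m Q) = \tr (X *m G *m X^T *m Sinv).
    by rewrite /Q !mulmxA mxtrace_mulC !mulmxA.
  have -> : k%:R / beta = \sum_(i < k) beta^-1.
    by rewrite sumr_const card_ord mulr_natl.
  rewrite /mxtrace; apply: ler_sum => i _; rewrite mul_mx_diag mxE [(\row__ _) _ _]mxE.
  rewrite ler_pdivlMr // mulrC ler_pdivrMr // mulrC; exact: ltW (sb i).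
have t4 : \tr (G *m Q) <= \tr (G *m Einv).
  by move: t1; rewrite mulmxBr linearB /= subr_ge0.
have : k%:R / beta <= n%:R by apply: le_trans t3 (le_trans t4 t2).
by rewrite ler_pdivrMr // mulrC.
Qed.

End Trace.

Section Family.
Variable R : realType.
Variable n : nat.
Variable Dm : 'M[R]_n.
Hypothesis sD : Dm^T = Dm.

Lemma ortho_family k : forall U : {vspace 'rV[R]_n},
  (forall u, u \in U -> u != 0 -> 0 < bf Dm u u) ->
  (k <= \dim U)%N ->
  exists s : seq 'rV[R]_n, [/\ size s = k,
    forall i, (i < k)%N -> s`_i \in U /\ 0 < bf Dm s`_i s`_i &
    forall i j, (i < k)%N -> (j < k)%N -> i != j -> bf Dm s`_i s`_j = 0].
Proof.
elim: k => [|k IH] U pU hk.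
  by exists [::]; split => // i; rewrite ltn0.
have U0 : U != 0%VS by rewrite -dimv_eq0 -lt0n (leq_ltn_trans _ hk).
set u := vpick U.
have uU : u \in U := memv_pick U.
have u0 : u != 0 by rewrite vpick0.
pose f : 'Hom('rV[R]_n, 'rV[R]_1) := linfun (mulmxr (Dm *m u^T)).
pose U' := (U :&: lker f)%VS.
have hk' : (k <= \dim U')%N.
  have := limg_ker_dim f U.
  have : (\dim (f @: U) <= 1)%N.
    by have := dimvS (subvf (f @: U)); rewrite dimvf /= dim_matrix.
  rewrite -/U' => h1 h2; move: hk; rewrite -h2; move: h1.
  set a := \dim (f @: U); set b := \dim U'; lia.
have pU' : forall v, v \in U' -> v != 0 -> 0 < bf Dm v v.
  by move=> v /memv_capP [vU _]; apply: pU.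
have [s [hs1 hs2 hs3]] := IH U' pU' hk'.
have orth v : v \in U' -> bf Dm v u = 0.
  move=> /memv_capP [_]; rewrite memv_ker lfunE /= => /eqP h.
  by rewrite /bf -mulmxA h mxE.
exists (u :: s); split => /=; first by rewrite hs1.
  case=> [|i] hi /=; first by split => //; apply: pU.
  have [/memv_capP [? _] ?] := hs2 i hi; by split.
case=> [|i] [|j] hi hj hij //=.
- by rewrite bfC // orth //; have [] := hs2 j hj.
- by rewrite orth //; have [] := hs2 i hi.
- by apply: hs3.
Qed.

End Family.

Section Main.
Variable R : realType.
Variable n : nat.
Variable G : 'M[R]_n.
Hypothesis sG : G^T = G.
Hypothesis pG : forall x : 'rV[R]_n, 0 <= qform G x.
Variable beta : R.
Hypothesis hb : 0 < beta.

Definition Bm := beta *: G - Dg G.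

Lemma BmE x y : bf Bm x y = beta * bf G x y - bf (Dg G) x y.
Proof. by rewrite /Bm bfDm bfNm bfZm. Qed.

Lemma BmT : Bm^T = Bm.
Proof. by rewrite /Bm linearB linearZ /= sG DgT. Qed.

Definition PDB (U : {vspace 'rV[R]_n}) :=
  forall u, u \in U -> u != 0 -> 0 < bf Bm u u.

Lemma stepU U : PDB U ->
  (exists W : {vspace 'rV[R]_n}, (n <= \dim U + \dim W)%N /\
      forall w, w \in W -> bf Bm w w <= 0) \/
  (exists U', PDB U' /\ \dim U' = (\dim U).+1).
Proof.
move=> pU.
pose Ubm : 'M[R]_(\dim U, n) := \matrix_(i < \dim U) (vbasis U)`_i.
pose f : 'Hom('rV[R]_n, 'rV[R]_(\dim U)) := linfun (mulmxr (Bm *m Ubm^T)).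
pose W := lker f.
have dimW : (n <= \dim U + \dim W)%N.
  have := limg_ker_dim f fullv.
  have : (\dim (f @: fullv) <= \dim U)%N.
    have := dimvS (subvf (f @: fullv)); by rewrite dimvf /= dim_matrix mul1r.
  rewrite capfv dimvf /= dim_matrix mul1r -/W.
  set a := \dim (f @: _); set b := \dim W; lia.
have orth w u : w \in W -> u \in U -> bf Bm w u = 0.
  move=> wW uU.
  have -> : u = (\row_i coord (vbasis U) i u) *m Ubm.
    rewrite mulmx_sum_row [LHS](coord_vbasis uU); apply: eq_bigr => i _.
    by rewrite rowK mxE.
  move: wW; rewrite memv_ker lfunE /= => /eqP h.
  by rewrite /bf trmx_mul !mulmxA -(mulmxA w) h mul0mx mxE.
case: (classic (forall w, w \in W -> bf Bm w w <= 0)) => [allW|nW].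
  by left; exists W.
have := not_all_ex_not _ _ nW.
case=> w nb0; have [wW nb] := imply_to_and _ _ nb0.
move: nb => /negP; rewrite -real_ltNge ?num_real // => bw.
right.
have w0 : w != 0 by apply: contraTneq bw => ->; rewrite bf0l ltxx.
have wU : w \notin U.
  by apply: contraTN bw => wU; rewrite orth // ltxx.
have disj : (U :&: <[w]> = 0)%VS.
  apply/eqP; rewrite -subv0; apply/subvP => x /memv_capP [xU /vlineP [t xt]].
  rewrite memv0; apply/eqP; rewrite xt.
  have [->|t0] := eqVneq t 0; first by rewrite scale0r.
  have wx : w = t^-1 *: x by rewrite xt scalerA mulVf // scale1r.
  by move: wU; rewrite wx memvZ.
exists (U + <[w]>)%VS; split; last by rewrite dimv_disjoint_sum // dim_vline w0 addn1.
move=> x /memv_addP [u uU [v /vlineP [t ->] ->]] x0.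
have h1 : bf Bm w u = 0 by rewrite orth.
have h2 : bf Bm u w = 0 by rewrite bfC ?BmT // orth.
rewrite bfDl !bfDr !bfZl !bfZr h1 h2 mulr0 !addr0 add0r.
have [t0|t0] := eqVneq t 0.
  rewrite t0 mul0r addr0; apply: pU => //.
  by move: x0; rewrite t0 scale0r addr0.
have ge : 0 <= bf Bm u u.
  have [->|u0] := eqVneq u 0; first by rewrite bf0l.
  exact/ltW/pU.
apply: ltr_wpDl ge _; rewrite mulrA; apply: mulr_gt0 => //.
by rewrite -expr2 exprn_even_gt0 // t0.
Qed.

Lemma grow m : forall U, (n - \dim U <= m)%N -> PDB U ->
  exists U' (W : {vspace 'rV[R]_n}), [/\ PDB U', (n <= \dim U' + \dim W)%N &
    forall w, w \in W -> bf Bm w w <= 0].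
Proof.
elim: m => [|m IH] U hm pU; case: (stepU pU) => [[W [hW1 hW2]]|[U' [pU' hU']]].
- by exists U, W.
- have := dimvS (subvf U'); rewrite dimvf /= dim_matrix mul1r hU'; lia.
- by exists U, W.
- by apply: (IH U') => //; lia.
Qed.

Lemma PiPi : Pi G *m Pi G = Pi G.
Proof.
rewrite /Pi mulmx_diag; congr diag_mx; apply/rowP=> j; rewrite !mxE.
by case: (_ != 0); rewrite ?mulr1 ?mulr0.
Qed.

Lemma final : beta <= 1 -> exists W : {vspace 'rV[R]_n},
    (1 - beta) * n%:R <= (\dim W)%:R /\
    forall w : 'rV[R]_n, w \in W -> qform G w <= beta^-1 * qform (diagm G) w.
Proof.
move=> hb1.
have PDB0 : PDB 0%VS by move=> u; rewrite memv0 => /eqP ->; rewrite eqxx.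
have [U [W [pU hn hW]]] := grow (m := n) (U := 0%VS) (leq_subr _ _) PDB0.
have hDU : forall u, u \in U -> u != 0 -> 0 < bf (Dg G) u u.
  move=> u uU u0; rewrite lt_def (bfDg_ge0 pG) andbT.
  apply: contraTneq (pU u uU u0) => h.
  by rewrite BmE h (bfDg0 sG pG h) mulr0 subrr ltxx.
have [s [hs1 hs2 hs3]] := ortho_family (DgT G) hDU (leqnn (\dim U)).
set k := \dim U in hs1 hs2 hs3 hn.
pose X0 : 'M[R]_(k, n) := \matrix_(i < k) s`_i.
pose X := X0 *m Pi G.
have r i : row i X0 = s`_i by rewrite rowK.
have XG : X *m G *m X^T = X0 *m G *m X0^T.
  have -> : X *m G *m X^T = X0 *m (Pi G *m G *m Pi G) *m X0^T.
    by rewrite /X trmx_mul PiT !mulmxA.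
  by rewrite (PiGPi sG pG).
have XD : X *m Dg G *m X^T = X0 *m Dg G *m X0^T.
  have -> : X *m Dg G *m X^T = X0 *m (Pi G *m Dg G *m Pi G) *m X0^T.
    by rewrite /X trmx_mul PiT !mulmxA.
  by rewrite PiDg DgPi.
have hk : k%:R <= beta * n%:R.
  apply: (trace_bound pG hb (X := X) (s := \row_i bf (Dg G) s`_i s`_i)).
  - by rewrite /X -mulmxA PiPi.
  - rewrite XD; apply/matrixP => i j; rewrite mul3E !r [RHS]mxE.
    have [<-|ij] := eqVneq i j; first by rewrite mulr1n mxE.
    by rewrite mulr0n; apply: hs3.
  - by move=> i; rewrite mxE; exact: (hs2 i (ltn_ord i)).2.
  - move=> i; rewrite mxE XG mul3E r.
    have [siU sipos] := hs2 i (ltn_ord i).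
    have si0 : s`_i != 0 by apply: contraTneq sipos => ->; rewrite bf0l ltxx.
    by have := pU _ siU si0; rewrite BmE subr_gt0.
exists W; split.
  have : n%:R <= k%:R + (\dim W)%:R :> R by rewrite -natrD ler_nat.
  move: hk; set a := k%:R; set b := (\dim W)%:R; set c := n%:R.
  move=> h1 h2; have -> : (1 - beta) * c = c - beta * c by ring.
  lra.
move=> w wW; have := hW w wW; rewrite BmE subr_le0 => h.
by rewrite -(ler_pM2l hb) mulrA mulfV ?gt_eqF // mul1r.
Qed.

End Main.

Theorem lemma13 (R : realType) (n : nat) (G : 'M[R]_n) (beta : R) :
  psd G -> 0 < beta -> beta <= 1 ->
  exists W : {vspace 'rV[R]_n},
    (1 - beta) * n%:R <= (\dim W)%:R /\
    forall w : 'rV[R]_n, w \in W -> qform G w <= beta^-1 * qform (diagm G) w.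
Proof.
move=> [sG pG] hb hb1.
exact: (final sG pG hb hb1).
Qed.
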